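(* Let $(G,d(\cdot))$ be piecewise $\mathcal C^1$ with continuous reflection and suppose Assumption 2' holds with unit vectors $v_x$ and constants $r_x>0$, $0<c^1_x<1<c^2_x<\infty$, $\alpha_x>0$, $x\in\mathcal V$. Then for each $x\in\mathcal V$ there is a constant $A_x<\infty$ such that for every $r\in(0,r_x/c^2_x)$ there exists a nonnegative function $g_{x,r}\in\mathcal C^2_c(\overline G)$ such that: (1) $\mathrm{supp}[g_{x,r}]\cap\overline G\subset B_{c^2_xr}(x)\cap\overline G\subset B_{r_x}(x)\cap\overline G$; (2) $g_{x,r}(y)=1$ for each $y\in B_{c^1_xr}(x)\cap\overline G$; (3) $\sup_{y\in\overline G}|g_{x,r}(y)|\le A_x$, $\sup_{y\in\overline G}|\nabla g_{x,r}(y)|\le A_x/r$, $\sup_{y\in\overline G}\sum_{i,j=1}^J\big|\frac{\partial^2g_{x,r}(y)}{\partial y_i\partial y_j}\big|<A_x/r^2$; (4) $\langle d,\nabla g_{x,r}(y)\rangle\le0$ for all $d\in d(y)$ and $y\in\partial G$.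
   Context: Notation: $B_r(x)=\{y:|y-x|\le r\}$; $\mathrm{dist}(y,A)=\inf_{z\in A}|y-z|$; $\sigma:\mathbb R^J\to\mathbb R^{J\times N}$ continuous and $a=\sigma\sigma^T$. $\mathcal C^2_c(\overline G)$: restrictions to $\overline G$ of functions $\mathcal C^2$ on every open neighbourhood of $\overline G$ with compact support. Piecewise $\mathcal C^1$ with continuous reflection: $G=\bigcap_{i\in\mathcal I}G_i$ nonempty domain, $\mathcal I$ finite, $G_i=\{\phi^i>0\}$, $\partial G_i=\{\phi^i=0\}$ with $\phi^i\in\mathcal C^1(\mathbb R^J)$; $n^i(x)$ the unit inward normal to $\partial G_i$; $\mathcal I(x)=\{i:x\in\partial G_i\}$; $n(x)=\{\sum_{i\in\mathcal I(x)}s_in^i(x):s_i\ge0\}$; $\gamma^i$ continuous vector fields on $\partial G_i$ with $\langle n^i,\gamma^i\rangle>0$; $d(x)=\{\sum_{i\in\mathcal I(x)}s_i\gamma^i(x):s_i\ge0\}$ for $x\in\partial G$. $\mathcal U=\{x\in\partial G:\exists n\in n(x),\ \langle n,d\rangle>0\ \forall d\in d(x)\setminus\{0\}\}$. Assumption 2': $\mathcal V\subset\partial G$ is finite with $\mathcal V\supset\partial G\setminus\mathcal U$, and for each $x\in\mathcal V$ there exist a unit vector $v_x$ and constants $r_x>0$, $\alpha_x>0$, $0<c^1_x<1<c^2_x<\infty$ such that, with $\Theta_x=\{z:\langle z,v_x\rangle\ge0\}$, for all $y\in\overline G\cap B_{r_x}(x)$: (1) $\langle v_x,y-x\rangle\ge\alpha_x|y-x|$;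 (2) $\gamma^i(y)\in\Theta_x$ for each $i\in\mathcal I(y)\subset\mathcal I(x)$; (3) for every $r\in(0,r_x/c^2_x)$, $\overline G\cap B_{c^1_xr}(x)\subseteq\{y\in\overline G\cap B_{r_x}(x):\mathrm{dist}(y,x+rv_x+\Theta_x)>0\}\subseteq\overline G\cap B_{c^2_xr}(x)$; (4) $v_x^Ta(y)v_x\ge\alpha_x$ for all $y\in B_{r_x}(x)$. *)

(* Defs.v *)
From HB Require Import structures.
From mathcomp Require Import all_boot all_order all_algebra.
From mathcomp Require Import all_classical all_reals all_analysis.
Set Implicit Arguments. Unset Strict Implicit. Unset Printing Implicit Defensive.
Import Order.TTheory GRing.Theory Num.Theory.
Import numFieldNormedType.Exports.
Local Open Scope classical_set_scope.
Local Open Scope ring_scope.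

Section Defs.
Variables (R : realType) (J : nat).
Notation vec := 'rV[R]_J.

Definition dotp (u v : vec) : R := \sum_(k < J) u 0 k * v 0 k.
Definition enorm (u : vec) : R := Num.sqrt (dotp u u).

Definition cball (x : vec) (r : R) : set vec := [set y | enorm (y - x) <= r].

Definition distS (y : vec) (A : set vec) : R := inf [set enorm (y - z) | z in A].

Definition bdry (A : set vec) : set vec := closure A `\` interior A.

Definition ebase (k : 'I_J) : vec := delta_mx 0 k.

Definition partial (f : vec -> R) (k : 'I_J) (y : vec) : R := 'D_(ebase k) f y.

Definition grad (f : vec -> R) (y : vec) : vec := \row_k partial f k y.

Definition C1 (f : vec -> R) : Prop :=
  forall k : 'I_J, (forall y, derivable f y (ebase k)) /\ continuous (partial f k).

Definition C2 (f : vec -> R) : Prop := C1 f /\ forall k : 'I_J, C1 (partial f k).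

Definition supp (f : vec -> R) : set vec := closure [set y | f y != 0].

Variable I : finType.

Definition Gi (phi : I -> vec -> R) (i : I) : set vec := [set y | 0 < phi i y].
Definition Gset (phi : I -> vec -> R) : set vec := [set y | forall i, 0 < phi i y].
Definition bGi (phi : I -> vec -> R) (i : I) : set vec := [set y | phi i y = 0].

Definition nrm (phi : I -> vec -> R) (i : I) (y : vec) : vec :=
  (enorm (grad (phi i) y))^-1 *: grad (phi i) y.

Definition Iset (phi : I -> vec -> R) (x : vec) : set I := [set i | bGi phi i x].

Definition cone (phi : I -> vec -> R) (w : I -> vec -> vec) (x : vec) : set vec :=
  [set u | exists s : I -> R, (forall i, 0 <= s i) /\
     u = \sum_(i | `[< Iset phi x i >]) s i *: w i x].

Definition ncone (phi : I -> vec -> R) (x : vec) : set vec := cone phi (nrm phi) x.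
Definition dcone (phi : I -> vec -> R) (gamma : I -> vec -> vec) (x : vec) : set vec :=
  cone phi gamma x.

Definition pw_C1_cont_refl (phi : I -> vec -> R) (gamma : I -> vec -> vec) : Prop :=
  [/\ Gset phi !=set0 /\ connected (Gset phi),
      forall i, C1 (phi i),
      (forall i, bdry (Gi phi i) = bGi phi i) /\
      (forall i y, bGi phi i y -> grad (phi i) y != 0),
      forall i, {within bGi phi i, continuous (gamma i)} &
      forall i y, bGi phi i y -> 0 < dotp (nrm phi i y) (gamma i y)].

Definition Uset (phi : I -> vec -> R) (gamma : I -> vec -> vec) : set vec :=
  [set x | bdry (Gset phi) x /\
     exists2 n, ncone phi x n &
       forall d, dcone phi gamma x d -> d != 0 -> 0 < dotp n d].

Definition Theta (v : vec) : set vec := [set z | 0 <= dotp z v].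

Definition assumption2' (N : nat) (sigma : vec -> 'M[R]_(J, N))
  (phi : I -> vec -> R) (gamma : I -> vec -> vec) (V : set vec)
  (v : vec -> vec) (rr alpha c1 c2 : vec -> R) : Prop :=
  [/\ finite_set V, V `<=` bdry (Gset phi),
      bdry (Gset phi) `\` Uset phi gamma `<=` V &
      forall x, V x ->
      [/\ enorm (v x) = 1 /\ 0 < rr x /\ 0 < alpha x /\ 0 < c1 x /\ c1 x < 1 /\ 1 < c2 x,
        (forall y, closure (Gset phi) y -> cball x (rr x) y ->
           [/\ alpha x * enorm (y - x) <= dotp (v x) (y - x),
               Iset phi y `<=` Iset phi x &
               forall i, Iset phi y i -> Theta (v x) (gamma i y)]),
        (forall r, 0 < r -> r < rr x / c2 x ->
           closure (Gset phi) `&` cball x (c1 x * r)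
           `<=` [set y | closure (Gset phi) y /\ cball x (rr x) y /\
                 0 < distS y [set x + r *: v x + z | z in Theta (v x)]] /\
           [set y | closure (Gset phi) y /\ cball x (rr x) y /\
                 0 < distS y [set x + r *: v x + z | z in Theta (v x)]]
           `<=` closure (Gset phi) `&` cball x (c2 x * r)) &
        forall y, cball x (rr x) y ->
           alpha x <= (v x *m (sigma y *m (sigma y)^T) *m (v x)^T) 0 0]].

End Defs.

(* Main.v *)
Require Import Defs.
From HB Require Import structures.
From mathcomp Require Import all_boot all_order all_algebra.
From mathcomp Require Import all_classical all_reals all_analysis.
From mathcomp Require Import ring lra.
Import Order.TTheory GRing.Theory Num.Theory.
Import numFieldNormedType.Exports.
Local Open Scope classical_set_scope.
Local Open Scope ring_scope.
Set Implicit Arguments. Unset Strict Implicit. Unset Printing Implicit Defensive.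

Section OneD.
Variable R : realType.

Lemma is_derive_bound (f : R -> R) a D M : 0 <= M ->
  (forall x, `|x - a| <= 1 -> `|f x - f a - D * (x - a)| <= M * (x - a) ^+ 2) ->
  is_derive a 1 f D.
Proof.
move=> M0 Hb.
have HC : (fun h : R => h^-1 *: ((f \o shift a) (h *: 1) - f a)) @ 0^' --> D.
  apply/cvgrPdist_le => e e0.
  near=> h.
  have h0 : h != 0 by near: h; exact: nbhs_dnbhs_neq.
  have hs1 : `|h| <= 1 by near: h; apply: dnbhs0_le.
  have hs2 : `|h| <= e / (M + 1).
    by near: h; apply: dnbhs0_le; rewrite divr_gt0 // ltr_pwDr.
  have := Hb (h + a); rewrite addrK => /(_ hs1) H.
  rewrite /= scaler1.
  have -> : D - h^-1 * (f (h + a) - f a) = - (h^-1 * (f (h + a) - f a - D * h)).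
    by field.
  rewrite normrN normrM normrV ?unitfE // ler_pdivrMl ?normr_gt0 //.
  apply: (le_trans H).
  rewrite -(real_normK (num_real h)) expr2 mulrA [_ * e]mulrC ler_pM2r ?normr_gt0 //.
  rewrite ler_pdivlMr ?ltr_pwDr // in hs2.
  apply: le_trans hs2.
  by rewrite mulrC ler_pM2l ?normr_gt0 // lerDl.
apply: DeriveDef; first by apply/cvg_ex; exists D.
exact: cvg_lim.
Unshelve. all: by end_near.
Qed.

Definition pp (u : R) : R := if u <= 0 then 0 else u.

Lemma pp_cases u : (u <= 0 /\ pp u = 0) \/ (0 <= u /\ pp u = u).
Proof.
rewrite /pp; have [u0|u0] := leP u 0.
  by left.
by right; split; [exact: ltW|].
Qed.

Lemma pp_ge0 u : 0 <= pp u.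
Proof. by case: (pp_cases u) => -[? ->]. Qed.

Lemma T2_bound a b : `|pp a ^+ 2 - pp b ^+ 2 - 2 * pp b * (a - b)| <= 1 * (a - b) ^+ 2.
Proof.
have := sqr_ge0 (a - b); have := sqr_ge0 a; have := sqr_ge0 b.
rewrite ler_norml; case: (pp_cases a) => -[? ->]; case: (pp_cases b) => -[? ->];
move=> *; apply/andP; split; nra.
Qed.

Lemma T3_bound a b : `|a - b| <= 1 ->
  `|pp a ^+ 3 - pp b ^+ 3 - 3 * pp b ^+ 2 * (a - b)| <= (3 * `|b| + 1) * (a - b) ^+ 2.
Proof.
rewrite !ler_norml => /andP[h1 h2].
have := sqr_ge0 (a - b); have := sqr_ge0 a; have := sqr_ge0 b.
have [b0|b0] := leP 0 b.
  rewrite (ger0_norm b0).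
  case: (pp_cases a) => -[? ->]; case: (pp_cases b) => -[? ->]; move=> *; apply/andP; split; nra.
rewrite (ltr0_norm b0).
case: (pp_cases a) => -[? ->]; case: (pp_cases b) => -[? ->]; move=> *; apply/andP; split; nra.
Qed.


Definition T3 (u : R) : R := pp u ^+ 3.
Definition T2 (u : R) : R := 3 * pp u ^+ 2.
Definition T1 (u : R) : R := 6 * pp u.

Lemma T3_derive (u : R) : is_derive u (1:R) T3 (T2 u).
Proof.
apply: (@is_derive_bound _ _ _ (3 * `|u| + 1)); first by rewrite addr_ge0 ?mulr_ge0.
by move=> y hy; rewrite /T3 /T2; apply: T3_bound.
Qed.

Lemma T2_derive (u : R) : is_derive u (1:R) T2 (T1 u).
Proof.
apply: (@is_derive_bound _ _ _ 3); first by [].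
move=> y _; rewrite /T2 /T1.
have := T2_bound y u; move=> H.
have -> : 3 * pp y ^+ 2 - 3 * pp u ^+ 2 - 6 * pp u * (y - u) =
   3 * (pp y ^+ 2 - pp u ^+ 2 - 2 * pp u * (y - u)) by ring.
by rewrite normrM ger0_norm // ler_pM2l // -[(y - u) ^+ 2]mul1r.
Qed.

Definition comb (F : R -> R) (u : R) : R :=
  (F u - 3 * F (u - 1) + 3 * F (u - 2) - F (u - 3)) / 6.

Lemma shift_derive (F F' : R -> R) (c : R) (u : R) :
  (forall u : R, is_derive u (1:R) F (F' u)) -> is_derive u (1:R) (fun t => F (t + c)) (F' (u + c)).
Proof.
move=> HF.
have := @is_derive1_comp _ F (shift c) u (F' (u + c)) 1 (HF _) (is_derive_shift _ _ _).
by rewrite mulr1.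
Qed.

Lemma comb_derive (F F' : R -> R) :
  (forall u : R, is_derive u (1:R) F (F' u)) -> forall u : R, is_derive u (1:R) (comb F) (comb F' u).
Proof.
move=> HF u.
have H0 := HF u.
have H1 := @shift_derive F F' (-1) u HF.
have H2 := @shift_derive F F' (-2) u HF.
have H3 := @shift_derive F F' (-3) u HF.
move: (is_deriveZ (6^-1) (is_deriveB (is_deriveD (is_deriveB H0 (is_deriveZ 3 H1)) (is_deriveZ 3 H2)) H3)).
match goal with |- is_derive _ _ ?f _ -> _ =>
  have E : comb F = f by apply/funext => t; rewrite /comb /= mulrC end.
rewrite E => H. apply: (is_derive_eq H).
by rewrite /comb /= mulrC.
Qed.


Definition S0 := comb T3.
Definition S1 := comb T2.
Definition S2 := comb T1.

Ltac ppcase u :=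
  case: (pp_cases u) => -[? ->]; case: (pp_cases (u - 1)) => -[? ->];
  case: (pp_cases (u - 2)) => -[? ->]; case: (pp_cases (u - 3)) => -[? ->].

Lemma S_le0 u : u <= 0 -> [/\ S0 u = 0, S1 u = 0 & S2 u = 0].
Proof.
move=> u0; rewrite /S0 /S1 /S2 /comb /T3 /T2 /T1.
ppcase u; split; (try lra); nra.
Qed.

Lemma S_ge3 u : 3 <= u -> [/\ S0 u = 1, S1 u = 0 & S2 u = 0].
Proof.
move=> u0; rewrite /S0 /S1 /S2 /comb /T3 /T2 /T1.
ppcase u; split; (try lra); nra.
Qed.

Lemma S2_bound u : `|S2 u| <= 1.
Proof.
rewrite /S2 /comb /T1 ler_norml.
ppcase u; apply/andP; split; lra.
Qed.

Lemma S1_bound u : 0 <= S1 u <= 1.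
Proof.
rewrite /S1 /comb /T2.
ppcase u; apply/andP; split; nra.
Qed.

Lemma cube_hint (w : R) : 0 <= w -> w <= 1 ->
  [/\ 0 <= w ^+ 2, w ^+ 2 <= w, 0 <= w ^+ 3, w ^+ 3 <= w ^+ 2 & 2 * w ^+ 2 - w <= w ^+ 3].
Proof.
move=> w0 w1; have h2 : w ^+ 2 <= w by rewrite expr2 ler_piMr.
split; rewrite ?exprn_ge0 //.
  by rewrite exprS ler_piMl // exprn_ge0.
rewrite -subr_ge0.
have -> : w ^+ 3 - (2 * w ^+ 2 - w) = w * (w - 1) ^+ 2 by ring.
by rewrite mulr_ge0 ?sqr_ge0.
Qed.

Lemma S0_bound u : 0 <= S0 u <= 1.
Proof.
have [u0|u0] := leP u 0.
  by case: (@S_le0 u u0) => ->; rewrite lexx ler01.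
have [u3|u3] := leP 3 u.
  by case: (@S_ge3 u u3) => ->; rewrite lexx ler01.
rewrite /S0 /comb /T3.
have [u1|u1] := leP u 1.
  have [] := @cube_hint u (ltW u0) u1; rewrite !exprS expr0 !mulr1 => *.
  ppcase u; apply/andP; split; nra.
have [u2|u2] := leP u 2.
  have [] := @cube_hint (u - 1) ltac:(lra) ltac:(lra); rewrite !exprS expr0 !mulr1 => *.
  ppcase u; apply/andP; split; nra.
have [] := @cube_hint (u - 2) ltac:(lra) ltac:(lra); rewrite !exprS expr0 !mulr1 => *.
ppcase u; apply/andP; split; nra.
Qed.

End OneD.

Section Lam.
Variable R : realType.

Lemma isdM (f g : R -> R) (t0 df dg D : R) :
  is_derive t0 (1:R) f df -> is_derive t0 (1:R) g dg -> D = f t0 * dg + g t0 * df ->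
  is_derive t0 (1:R) (fun t => f t * g t) D.
Proof.
move=> Hf Hg ->; move: (is_deriveM Hf Hg).
match goal with |- is_derive _ _ ?F _ -> _ =>
  have E : (fun t => f t * g t) = F by apply/funext end.
by rewrite E.
Qed.

Lemma isdD (f g : R -> R) (t0 df dg D : R) :
  is_derive t0 (1:R) f df -> is_derive t0 (1:R) g dg -> D = df + dg ->
  is_derive t0 (1:R) (fun t => f t + g t) D.
Proof.
move=> Hf Hg ->; move: (is_deriveD Hf Hg).
match goal with |- is_derive _ _ ?F _ -> _ =>
  have E : (fun t => f t + g t) = F by apply/funext end.
by rewrite E.
Qed.

Lemma isdC (H : R -> R) (f : R -> R) (t0 df dH D : R) :
  is_derive t0 (1:R) f df -> is_derive (f t0) (1:R) H dH -> D = dH * df ->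
  is_derive t0 (1:R) (fun t => H (f t)) D.
Proof.
move=> Hf HH ->; move: (is_derive1_comp HH Hf).
match goal with |- is_derive _ _ ?F _ -> _ =>
  have E : (fun t => H (f t)) = F by apply/funext end.
by rewrite E.
Qed.

Lemma isd_cst (c t0 : R) : is_derive t0 (1:R) (fun _ => c) 0.
Proof.
move: (@is_derive_cst _ R R c t0 1).
match goal with |- is_derive _ _ ?F _ -> _ =>
  have E : (fun _ : R => c) = F by apply/funext end.
by rewrite E.
Qed.

Lemma isd_id (t0 : R) : is_derive t0 (1:R) (fun t => t) 1.
Proof.
move: (@is_derive_id _ R t0 1).
match goal with |- is_derive _ _ ?F _ -> _ =>
  have E : (fun t : R => t) = F by apply/funext end.
by rewrite E.
Qed.

End Lam.

Section Lam2.
Variable R : realType.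

Lemma isd_aff (a b : R) : is_derive (0:R) (1:R) (fun t => a + t * b) b.
Proof.
apply: (isdD (isd_cst a 0) (isdM (isd_id 0) (isd_cst b 0) erefl)).
rewrite /=; ring.
Qed.

Lemma isd_quad (a b : R) : is_derive (0:R) (1:R) (fun t => a + t * b + t ^+ 2) b.
Proof.
have -> : (fun t : R => a + t * b + t ^+ 2) = (fun t => (a + t * b) + t * t).
  by apply/funext => t; rewrite expr2.
apply: (isdD (isd_aff a b) (isdM (isd_id 0) (isd_id 0) erefl)).
rewrite /=; ring.
Qed.

Lemma isdG_aff (G G' : R -> R) : (forall u, is_derive u (1:R) G (G' u)) ->
  forall a b : R, is_derive (0:R) (1:R) (fun t => G (a + t * b)) (G' a * b).
Proof.
move=> hG a b; apply: (isdC (isd_aff a b) (hG _)).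
by rewrite mul0r addr0.
Qed.

Lemma isdG_quad (G G' : R -> R) : (forall u, is_derive u (1:R) G (G' u)) ->
  forall a b : R, is_derive (0:R) (1:R) (fun t => G (a + t * b + t ^+ 2)) (G' a * b).
Proof.
move=> hG a b; apply: (isdC (isd_quad a b) (hG _)).
by rewrite mul0r addr0 expr2 mul0r addr0.
Qed.

End Lam2.

Section Vec.
Variables (R : realType) (J : nat).
Local Notation vec := 'rV[R]_J.

Lemma dotpC (u w : vec) : dotp u w = dotp w u.
Proof. by rewrite /dotp; apply: eq_bigr => i _; rewrite mulrC. Qed.

Lemma dotpDl (a b c : vec) : dotp (a + b) c = dotp a c + dotp b c.
Proof. by rewrite /dotp -big_split; apply: eq_bigr => i _; rewrite mxE mulrDl. Qed.

Lemma dotpDr (a b c : vec) : dotp c (a + b) = dotp c a + dotp c b.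
Proof. by rewrite dotpC dotpDl !(dotpC c). Qed.

Lemma dotpZl (s : R) (a c : vec) : dotp (s *: a) c = s * dotp a c.
Proof. by rewrite /dotp mulr_sumr; apply: eq_bigr => i _; rewrite mxE mulrA. Qed.

Lemma dotpZr (s : R) (a c : vec) : dotp c (s *: a) = s * dotp c a.
Proof. by rewrite dotpC dotpZl dotpC. Qed.

Lemma dotpNl (a c : vec) : dotp (- a) c = - dotp a c.
Proof. by rewrite -scaleN1r dotpZl mulN1r. Qed.

Lemma dotpBl (a b c : vec) : dotp (a - b) c = dotp a c - dotp b c.
Proof. by rewrite dotpDl dotpNl. Qed.

Lemma dotpBr (a b c : vec) : dotp c (a - b) = dotp c a - dotp c b.
Proof. by rewrite dotpC dotpBl !(dotpC c). Qed.

Lemma ebaseE (k j : 'I_J) : ebase R k 0 j = (k == j)%:R.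
Proof. by rewrite /ebase mxE eqxx /= eq_sym. Qed.

Lemma dotp_ebase (u : vec) k : dotp u (ebase R k) = u 0 k.
Proof.
rewrite /dotp (bigD1 k) //= ebaseE eqxx mulr1 big1 ?addr0 // => i ik.
by rewrite ebaseE eq_sym (negbTE ik) mulr0.
Qed.

Lemma dotp_ebase_ebase (k : 'I_J) : dotp (ebase R k) (ebase R k) = 1.
Proof. by rewrite dotp_ebase ebaseE eqxx. Qed.

Lemma dotp_ge0 (u : vec) : 0 <= dotp u u.
Proof. by rewrite /dotp sumr_ge0 // => i _; rewrite -expr2 sqr_ge0. Qed.

Lemma enorm_ge0 (u : vec) : 0 <= enorm u.
Proof. exact: sqrtr_ge0. Qed.

Lemma enorm_sqr (u : vec) : enorm u ^+ 2 = dotp u u.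
Proof. by rewrite /enorm sqr_sqrtr // dotp_ge0. Qed.

Lemma dotp_le_enorm (u n : vec) : enorm n = 1 -> `|dotp n u| <= enorm u.
Proof.
move=> n1.
have nn : dotp n n = 1 by rewrite -enorm_sqr n1 expr1n.
set t := dotp n u.
have : 0 <= dotp (u - t *: n) (u - t *: n) by apply: dotp_ge0.
rewrite !dotpBl !dotpBr !dotpZl !dotpZr nn (dotpC u n) -/t.
move=> H.
have H2 : t ^+ 2 <= enorm u ^+ 2 by rewrite enorm_sqr; nra.
by rewrite -ler_sqr ?nnegrE ?normr_ge0 ?enorm_ge0 // real_normK ?num_real.
Qed.

Lemma coord_le_enorm (u : vec) k : `|u 0 k| <= enorm u.
Proof.
have : (u 0 k) ^+ 2 <= dotp u u.
  rewrite /dotp (bigD1 k) //= -expr2 lerDl sumr_ge0 // => i _.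
  by rewrite -expr2 sqr_ge0.
rewrite -enorm_sqr => H.
by rewrite -ler_sqr ?nnegrE ?normr_ge0 ?enorm_ge0 // real_normK ?num_real.
Qed.


Lemma partial_line (F : vec -> R) (y : vec) k (phi : R -> R) (D : R) :
  (forall t, F (t *: ebase R k + y) = phi t) -> is_derive (0:R) (1:R) phi D ->
  derivable F y (ebase R k) /\ partial F k y = D.
Proof.
move=> Hp HD.
have E : (fun h : R => h^-1 *: ((F \o shift y) (h *: ebase R k) - F y)) =
         (fun h : R => h^-1 *: ((phi \o shift 0) (h *: 1) - phi 0)).
  apply/funext => h /=.
  by rewrite -!Hp scale0r add0r addr0 [h *: 1]mulr1.
split.
  rewrite /derivable E; exact: ex_derive.
by rewrite /partial /derive E; exact: derive_val.
Qed.

End Vec.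

Section Cont.
Variables (R : realType) (T : topologicalType).

Lemma contM (f g : T -> R) : continuous f -> continuous g -> continuous (fun y => f y * g y).
Proof. by move=> cf cg y; exact: (continuousM (cf y) (cg y)). Qed.

Lemma contD (f g : T -> R) : continuous f -> continuous g -> continuous (fun y => f y + g y).
Proof.
move=> cf cg y; move: (continuousD (cf y) (cg y)).
match goal with |- {for _, continuous ?F} -> _ =>
  have E : (fun y => f y + g y) = F by apply/funext end.
by rewrite E.
Qed.

Lemma contB (f g : T -> R) : continuous f -> continuous g -> continuous (fun y => f y - g y).
Proof.
move=> cf cg y; move: (continuousB (cf y) (cg y)).
match goal with |- {for _, continuous ?F} -> _ =>
  have E : (fun y => f y - g y) = F by apply/funext end.
by rewrite E.
Qed.

Lemma cont_cst (c : R) : continuous (fun _ : T => c).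
Proof. by move=> y; apply: cst_continuous. Qed.

Lemma contC (G : R -> R) (f : T -> R) : continuous G -> continuous f -> continuous (fun y => G (f y)).
Proof. by move=> cG cf y; apply: continuous_comp; [exact: cf | exact: cG]. Qed.

Lemma cont_sum n (f : 'I_n -> T -> R) : (forall i, continuous (f i)) ->
  continuous (fun y => \sum_(i < n) f i y).
Proof.
elim: n f => [|n IH] f hf.
  have -> : (fun y : T => \sum_(i < 0) f i y) = fun _ => 0 by apply/funext => y; rewrite big_ord0.
  exact: cont_cst.
have -> : (fun y : T => \sum_(i < n.+1) f i y) = fun y => \sum_(i < n) f (widen_ord (leqnSn n) i) y + f ord_max y.
  by apply/funext => y; rewrite big_ord_recr.
apply: contD; last exact: hf.
by apply: IH => i; exact: hf.
Qed.

End Cont.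

Lemma derive_cont (R : realType) (G G' : R -> R) : (forall u, is_derive u (1:R) G (G' u)) -> continuous G.
Proof.
move=> hG u; apply: differentiable_continuous; apply/derivable1_diffP.
exact: ex_derive.
Qed.

Section Bump.
Variables (R : realType) (J : nat).
Local Notation vec := 'rV[R]_J.
Variables (x w : vec) (H H1 H2 K K1 K2 : R -> R).
Hypotheses (dH : forall u, is_derive u (1:R) H (H1 u))
  (dH1 : forall u, is_derive u (1:R) H1 (H2 u))
  (dK : forall u, is_derive u (1:R) K (K1 u))
  (dK1 : forall u, is_derive u (1:R) K1 (K2 u)).

Definition Lf (y : vec) := dotp w (y - x).
Definition Qf (y : vec) := dotp (y - x) (y - x).
Definition cf (j : 'I_J) (y : vec) := (y - x) 0 j.

Definition gf (y : vec) := H (Lf y) * K (Qf y).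
Definition dgf k (y : vec) :=
  H1 (Lf y) * w 0 k * K (Qf y) + H (Lf y) * (K1 (Qf y) * (2 * cf k y)).
Definition ddgf k j (y : vec) :=
  (H2 (Lf y) * w 0 j * w 0 k * K (Qf y) + H1 (Lf y) * w 0 k * (K1 (Qf y) * (2 * cf j y)))
  + (H1 (Lf y) * w 0 j * (K1 (Qf y) * (2 * cf k y)) +
     H (Lf y) * (K2 (Qf y) * (2 * cf j y) * (2 * cf k y) + K1 (Qf y) * (2 * (j == k)%:R))).

Lemma Lf_line j t y : Lf (t *: ebase R j + y) = Lf y + t * w 0 j.
Proof.
rewrite /Lf.
have -> : t *: ebase R j + y - x = (y - x) + t *: ebase R j by rewrite -addrA addrC.
by rewrite (dotpDr (y - x) (t *: ebase R j)) dotpZr dotp_ebase.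
Qed.

Lemma cf_line k j t y : cf k (t *: ebase R j + y) = cf k y + t * (j == k)%:R.
Proof. rewrite /cf !mxE eqxx /= (eq_sym k j); ring. Qed.

Lemma Qf_line j t y : Qf (t *: ebase R j + y) = Qf y + t * (2 * cf j y) + t ^+ 2.
Proof.
rewrite /Qf /cf.
have -> : t *: ebase R j + y - x = (y - x) + t *: ebase R j by rewrite -addrA addrC.
move: (y - x) => u.
rewrite !dotpDl !dotpDr !dotpZl !dotpZr dotp_ebase dotp_ebase_ebase.
rewrite (dotpC (ebase R j)) dotp_ebase; ring.
Qed.


Lemma gf_partial k y : derivable gf y (ebase R k) /\ partial gf k y = dgf k y.
Proof.
apply: (@partial_line _ _ _ _ _ (fun t => H (Lf y + t * w 0 k) * K (Qf y + t * (2 * cf k y) + t ^+ 2))).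
  by move=> t; rewrite /gf Lf_line Qf_line.
apply: (isdM (isdG_aff dH _ _) (isdG_quad dK _ _)).
rewrite /dgf /= !mul0r !addr0 expr2 mul0r addr0; ring.
Qed.

Lemma dgf_partial k j y : derivable (dgf k) y (ebase R j) /\ partial (dgf k) j y = ddgf k j y.
Proof.
apply: (@partial_line _ _ _ _ _ (fun t => H1 (Lf y + t * w 0 j) * w 0 k * K (Qf y + t * (2 * cf j y) + t ^+ 2)
   + H (Lf y + t * w 0 j) * (K1 (Qf y + t * (2 * cf j y) + t ^+ 2) * (2 * (cf k y + t * (j == k)%:R))))).
  by move=> t; rewrite /dgf Lf_line Qf_line cf_line.
apply: (isdD (isdM (isdM (isdG_aff dH1 _ _) (isd_cst _ _) erefl) (isdG_quad dK _ _) erefl)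
  (isdM (isdG_aff dH _ _) (isdM (isdG_quad dK1 _ _) (isdM (isd_cst 2 0) (isd_aff _ _) erefl) erefl) erefl)).
rewrite /ddgf /= !mul0r !addr0 expr2 mul0r addr0; ring.
Qed.


Hypotheses (cH2 : continuous H2) (cK2 : continuous K2).

Lemma cont_cf j : continuous (cf j).
Proof.
have -> : cf j = fun y => y 0 j - x 0 j by apply/funext => y; rewrite /cf mxE mxE.
apply: contB; last exact: cont_cst.
exact: coord_continuous.
Qed.

Lemma cont_Lf : continuous Lf.
Proof.
have -> : Lf = fun y => \sum_(i < J) w 0 i * cf i y by [].
apply: cont_sum => i; apply: contM; [exact: cont_cst | exact: cont_cf].
Qed.

Lemma cont_Qf : continuous Qf.
Proof.
have -> : Qf = fun y => \sum_(i < J) cf i y * cf i y by [].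
apply: cont_sum => i; apply: contM; exact: cont_cf.
Qed.

Let cH := derive_cont dH.
Let cH1 := derive_cont dH1.
Let cK := derive_cont dK.
Let cK1 := derive_cont dK1.

Ltac contt := repeat first [ apply: contD | apply: contM | apply: cont_cst | apply: cont_cf
  | apply: (contC cH cont_Lf) | apply: (contC cH1 cont_Lf) | apply: (contC cH2 cont_Lf)
  | apply: (contC cK cont_Qf) | apply: (contC cK1 cont_Qf) | apply: (contC cK2 cont_Qf) ].

Lemma cont_dgf k : continuous (dgf k).
Proof. rewrite /dgf; contt. Qed.

Lemma cont_ddgf k j : continuous (ddgf k j).
Proof. rewrite /ddgf; contt. Qed.

Lemma C2_gf : C2 gf.
Proof.
have E k : partial gf k = dgf k by apply/funext => y; case: (gf_partial k y).
have E2 k j : partial (dgf k) j = ddgf k j by apply/funext => y; case: (dgf_partial k j y).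
split.
  move=> k; split; first by move=> y; case: (gf_partial k y).
  by rewrite E; exact: cont_dgf.
move=> k; rewrite E => j; split; first by move=> y; case: (dgf_partial k j y).
by rewrite E2; exact: cont_ddgf.
Qed.

End Bump.

Section Step.
Variable R : realType.

Lemma isd_aff_at (a b u : R) : is_derive u (1:R) (fun t => b + t * a) a.
Proof.
apply: (isdD (isd_cst b u) (isdM (isd_id u) (isd_cst a u) erefl)).
rewrite /=; ring.
Qed.

Lemma step_d0 (G G' : R -> R) (a b : R) : (forall u, is_derive u (1:R) G (G' u)) ->
  forall u, is_derive u (1:R) (fun t => 1 - G (b + t * a)) (- (G' (b + u * a) * a)).
Proof.
move=> hG u.
have -> : (fun t => 1 - G (b + t * a)) = (fun t => 1 + (-1) * G (b + t * a)).
  by apply/funext => t; ring.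
apply: (isdD (isd_cst 1 u) (isdM (isd_cst (-1) u) (isdC (isd_aff_at a b u) (hG _) erefl) erefl)).
rewrite /=; ring.
Qed.

Lemma step_d1 (G G' : R -> R) (a b : R) : (forall u, is_derive u (1:R) G (G' u)) ->
  forall u, is_derive u (1:R) (fun t => - (G (b + t * a) * a)) (- (G' (b + u * a) * a * a)).
Proof.
move=> hG u.
have -> : (fun t => - (G (b + t * a) * a)) = (fun t => (- a) * G (b + t * a)).
  by apply/funext => t; ring.
apply: (isdM (isd_cst (-a) u) (isdC (isd_aff_at a b u) (hG _) erefl) _).
rewrite /=; ring.
Qed.

Lemma pp_abs (u : R) : pp u = (u + `|u|) / 2.
Proof.
case: (pp_cases u) => -[h ->].
  by rewrite ler0_norm //; field.
by rewrite ger0_norm //; field.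
Qed.

Lemma cont_id : continuous (fun t : R => t).
Proof. by move=> t; exact: cvg_id. Qed.

Lemma cont_pp : continuous (@pp R).
Proof.
have -> : @pp R = fun u => (u + `|u|) * 2^-1 by apply/funext => u; rewrite pp_abs.
apply: contM; last exact: cont_cst.
apply: contD; first exact: cont_id.
exact: norm_continuous.
Qed.

Lemma cont_comb (F : R -> R) : continuous F -> continuous (comb F).
Proof.
move=> cF; rewrite /comb.
have csh c : continuous (fun u : R => F (u - c)).
  by apply: contC => //; apply: contB; [exact: cont_id | exact: cont_cst].
apply: contM; last exact: cont_cst.
apply: contB; last exact: csh.
apply: contD; last by apply: contM; [exact: cont_cst | exact: csh].
by apply: contB => //; apply: contM; [exact: cont_cst | exact: csh].
Qed.

Lemma cont_S2 : continuous (@S2 R).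
Proof.
apply: cont_comb; rewrite /T1.
apply: contM; [exact: cont_cst | exact: cont_pp].
Qed.

Lemma dS0 (u : R) : is_derive u (1:R) (@S0 R) (S1 u).
Proof. apply: comb_derive; exact: T3_derive. Qed.

Lemma dS1 (u : R) : is_derive u (1:R) (@S1 R) (S2 u).
Proof. apply: comb_derive; exact: T2_derive. Qed.

End Step.

Section Grad.
Variables (R : realType) (J : nat).
Local Notation vec := 'rV[R]_J.
Variables (x w : vec) (H H1 H2 K K1 K2 : R -> R).
Hypotheses (dH : forall u, is_derive u (1:R) H (H1 u))
  (dH1 : forall u, is_derive u (1:R) H1 (H2 u))
  (dK : forall u, is_derive u (1:R) K (K1 u))
  (dK1 : forall u, is_derive u (1:R) K1 (K2 u)).

Lemma grad_gf y : grad (gf x w H K) y = \row_k dgf x w H H1 K K1 k y.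
Proof.
by apply/rowP => k; rewrite !mxE; case: (gf_partial x w dH dK k y).
Qed.

Lemma grad_caseA y : K (Qf x y) = 1 -> K1 (Qf x y) = 0 ->
  grad (gf x w H K) y = H1 (Lf x w y) *: w.
Proof.
move=> k1 k0; rewrite grad_gf; apply/rowP => k; rewrite !mxE /dgf k1 k0; ring.
Qed.

Lemma grad_caseZ y : (H (Lf x w y) = 0 /\ H1 (Lf x w y) = 0) \/ (K (Qf x y) = 0 /\ K1 (Qf x y) = 0) ->
  grad (gf x w H K) y = 0.
Proof.
move=> hz; rewrite grad_gf; apply/rowP => k; rewrite !mxE /dgf.
by case: hz => -[-> ->]; ring.
Qed.

Lemma hess_gf k j y : partial (partial (gf x w H K) k) j y = ddgf x w H H1 H2 K K1 K2 k j y.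
Proof.
have E : partial (gf x w H K) k = dgf x w H H1 K K1 k.
  by apply/funext => z; case: (gf_partial x w dH dK k z).
by rewrite E; case: (dgf_partial x w dH dH1 dK dK1 k j y).
Qed.

Lemma ddgf_caseA k j y : K (Qf x y) = 1 -> K1 (Qf x y) = 0 -> K2 (Qf x y) = 0 ->
  ddgf x w H H1 H2 K K1 K2 k j y = H2 (Lf x w y) * w 0 j * w 0 k.
Proof. by move=> e1 e2 e3; rewrite /ddgf e1 e2 e3; ring. Qed.

Lemma ddgf_caseZ k j y :
  (H (Lf x w y) = 0 /\ H1 (Lf x w y) = 0 /\ H2 (Lf x w y) = 0) \/
  (K (Qf x y) = 0 /\ K1 (Qf x y) = 0 /\ K2 (Qf x y) = 0) ->
  ddgf x w H H1 H2 K K1 K2 k j y = 0.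
Proof. by rewrite /ddgf => -[[-> [-> ->]]|[-> [-> ->]]]; ring. Qed.

End Grad.

Section Vec2.
Variables (R : realType) (J : nat).
Local Notation vec := 'rV[R]_J.

Lemma dotp0r (u : vec) : dotp u 0 = 0.
Proof. by rewrite /dotp big1 // => i _; rewrite mxE mulr0. Qed.

Lemma dotp0l (u : vec) : dotp 0 u = 0.
Proof. by rewrite dotpC dotp0r. Qed.

Lemma dotp_suml (I : finType) (P : pred I) (F : I -> vec) (c : vec) :
  dotp (\sum_(i | P i) F i) c = \sum_(i | P i) dotp (F i) c.
Proof.
apply: (big_morph (fun a => dotp a c)); first by move=> a b; rewrite dotpDl.
exact: dotp0l.
Qed.

Lemma enormZ (s : R) (u : vec) : enorm (s *: u) = `|s| * enorm u.
Proof.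
rewrite /enorm dotpZl dotpZr mulrA -expr2 sqrtrM ?sqr_ge0 //.
by rewrite sqrtr_sqr.
Qed.

Lemma enorm0 : enorm (0 : vec) = 0.
Proof. by rewrite /enorm dotp0r sqrtr0. Qed.

End Vec2.


Unset Implicit Arguments. Set Strict Implicit.

Theorem propositionA4 (R : realType) (J N : nat) (I : finType)
  (sigma : 'rV[R]_J -> 'M[R]_(J, N))
  (phi : I -> 'rV[R]_J -> R) (gamma : I -> 'rV[R]_J -> 'rV[R]_J)
  (V : set 'rV[R]_J) (v : 'rV[R]_J -> 'rV[R]_J) (rr alpha c1 c2 : 'rV[R]_J -> R) :
  continuous sigma ->
  pw_C1_cont_refl phi gamma ->
  assumption2' sigma phi gamma V v rr alpha c1 c2 ->
  forall x, V x ->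
  exists A : R, forall r : R, 0 < r -> r < rr x / c2 x ->
  exists g : 'rV[R]_J -> R,
    [/\ C2 g /\ compact (supp g) /\
        (forall y, closure (Gset phi) y -> 0 <= g y),
        supp g `&` closure (Gset phi) `<=` cball x (c2 x * r) `&` closure (Gset phi)
          /\ cball x (c2 x * r) `&` closure (Gset phi)
             `<=` cball x (rr x) `&` closure (Gset phi),
        (forall y, cball x (c1 x * r) y -> closure (Gset phi) y -> g y = 1),
        [/\ forall y, closure (Gset phi) y -> `|g y| <= A,
            forall y, closure (Gset phi) y -> enorm (grad g y) <= A / r &
            exists2 B : R, B < A / r ^+ 2 &
              forall y, closure (Gset phi) y ->
                \sum_(i < J) \sum_(j < J) `|partial (partial g j) i y| <= B] &
        forall y, bdry (Gset phi) y ->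
          forall d, dcone phi gamma y d -> dotp d (grad g y) <= 0].
Proof.
move=> _ _ [_ _ _ HV] x Vx.
have [[v1 [rr0 [al0 [c10 [c11 c21]]]]] Hy H3 _] := HV x Vx.
move: v1 rr0 al0 c10 c11 c21 Hy H3.
set vx := v x; set c1x := c1 x; set c2x := c2 x; set rx := rr x; set alx := alpha x.
set G := closure (Gset phi).
move=> v1 rr0 al0 c10 c11 c21 Hy H3.
have vv : dotp vx vx = 1 by rewrite -enorm_sqr v1 expr1n.
pose a := 3 / (1 - c1x).
have a0 : 0 < a by rewrite divr_gt0 // subr_gt0.
exists (1 + a + J%:R ^+ 2 * a ^+ 2).
move=> r r0 rlt.
have c2r : c2x * r < rx by rewrite mulrC -ltr_pdivlMr // (lt_trans ltr01 c21).
have c2r0 : 0 < c2x * r by rewrite mulr_gt0 // (lt_trans ltr01 c21).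
pose b := - (a * c1x).
pose H := fun t : R => 1 - S0 (b + t * a).
pose H1 := fun t : R => - (S1 (b + t * a) * a).
pose H2 := fun t : R => - (S2 (b + t * a) * a * a).
pose rho1 := (2 * (c2x * r) + rx) / 3.
pose rho2 := (c2x * r + 2 * rx) / 3.
have r1a : c2x * r < rho1 by rewrite /rho1; lra.
have r12 : rho1 < rho2 by rewrite /rho1 /rho2; lra.
have r2r : rho2 < rx by rewrite /rho2; lra.
have rho10 : 0 < rho1 by lra.
have rsq : rho1 ^+ 2 < rho2 ^+ 2 by rewrite ltr_pXn2r // ?nnegrE; lra.
pose aK := 3 / (rho2 ^+ 2 - rho1 ^+ 2).
have aK0 : 0 < aK by rewrite divr_gt0 // subr_gt0.
pose bK := - (aK * rho1 ^+ 2).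
pose K := fun s : R => 1 - S0 (bK + s * aK).
pose K1 := fun s : R => - (S1 (bK + s * aK) * aK).
pose K2 := fun s : R => - (S2 (bK + s * aK) * aK * aK).
pose w := r^-1 *: vx.
have dH : forall u, is_derive u (1:R) H (H1 u) := step_d0 a b (@dS0 R).
have dH1 : forall u, is_derive u (1:R) H1 (H2 u) := step_d1 a b (@dS1 R).
have dK : forall u, is_derive u (1:R) K (K1 u) := step_d0 aK bK (@dS0 R).
have dK1 : forall u, is_derive u (1:R) K1 (K2 u) := step_d1 aK bK (@dS1 R).
have cstep (aa bb : R) : continuous (fun t : R => - (S2 (bb + t * aa) * aa * aa)).
  have -> : (fun t : R => - (S2 (bb + t * aa) * aa * aa)) = (fun t => (- (aa * aa)) * S2 (bb + t * aa)).
    by apply/funext => t; ring.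
  apply: contM; first exact: cont_cst.
  apply: contC; first exact: cont_S2.
  apply: contD; first exact: cont_cst.
  apply: contM; [exact: cont_id | exact: cont_cst].
have cH2 : continuous H2 := cstep a b.
have cK2 : continuous K2 := cstep aK bK.
exists (gf x w H K).
have hL y : Lf x w y = r^-1 * dotp vx (y - x) by rewrite /Lf /w dotpZl.
have hQ y : Qf x y = enorm (y - x) ^+ 2 by rewrite /Qf enorm_sqr.
have hCS y : `|dotp vx (y - x)| <= enorm (y - x) by exact: dotp_le_enorm.
have en0 y : 0 <= enorm (y - x) by exact: enorm_ge0.
have F2 y : G y -> enorm (y - x) <= rx -> c2x * r < enorm (y - x) -> r < dotp vx (y - x).
  move=> Gy yr ylt.
  have c20 : 0 < c2x by apply: lt_trans c21.
  pose m := Order.min (rx / c2x) (enorm (y - x) / c2x).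
  have [m1 m2] : m <= rx / c2x /\ m <= enorm (y - x) / c2x.
    by have := lexx m; rewrite {2}/m le_min => /andP.
  have rm : r < m.
    rewrite /m lt_min; apply/andP; split => //.
    by rewrite ltr_pdivlMr // mulrC.
  pose r' := (r + m) / 2.
  have r'0 : 0 < r' by rewrite /r'; lra.
  have r'1 : r' < rx / c2x by rewrite /r'; lra.
  have r'2 : c2x * r' < enorm (y - x).
    by rewrite mulrC -ltr_pdivlMr //; rewrite /r'; lra.
  have [_ inc2] := H3 r' r'0 r'1.
  rewrite ltNge; apply/negP => hle.
  suff : (G `&` cball x (c2x * r')) y.
    by move=> [_]; rewrite /cball /= => /(lt_le_trans r'2); rewrite ltxx.
  apply: inc2; split => //; split => //.
  apply: (@lt_le_trans _ _ (r' - dotp vx (y - x))); first by rewrite /r'; lra.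
  apply: lb_le_inf.
    exists (enorm (y - (x + r' *: vx + 0))); exists (x + r' *: vx + 0) => //.
    by exists 0 => //; rewrite /Theta /= dotp0l.
  move=> _ [z [u Tu <-] <-].
  have := dotp_le_enorm (y - (x + r' *: vx + u)) v1.
  have -> : y - (x + r' *: vx + u) = (y - x) - (r' *: vx + u).
    by rewrite opprD opprD !addrA opprD addrA.
  have -> : dotp vx (y - x - (r' *: vx + u)) = dotp vx (y - x) - r' - dotp u vx.
    by rewrite (dotpBr (y - x)) (dotpDr (r' *: vx) u) dotpZr vv (dotpC vx u) mulr1 opprD addrA.
  move: Tu; rewrite /Theta /= => Tu.
  move=> hn; apply: le_trans hn.
  rewrite -normrN; apply: le_trans (ler_norm _); lra.
have eA : a * (1 - c1x) = 3 by rewrite /a; field; rewrite subr_eq0 eq_sym; apply/negP => /eqP h; lra.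
have eK : aK * (rho2 ^+ 2 - rho1 ^+ 2) = 3.
  by rewrite /aK; field; rewrite subr_eq0 eq_sym; apply/negP => /eqP h; lra.
have caseKlo s : s <= rho1 ^+ 2 -> [/\ K s = 1, K1 s = 0 & K2 s = 0].
  move=> hs; have hz : bK + s * aK <= 0 by rewrite /bK; nra.
  have [e0 e1 e2] := S_le0 hz.
  by rewrite /K /K1 /K2 e0 e1 e2; split; ring.
have caseKhi s : rho2 ^+ 2 <= s -> [/\ K s = 0, K1 s = 0 & K2 s = 0].
  move=> hs; have hz : 3 <= bK + s * aK by rewrite /bK; nra.
  have [e0 e1 e2] := S_ge3 hz.
  by rewrite /K /K1 /K2 e0 e1 e2; split; ring.
have caseHlo t : t <= c1x -> H t = 1.
  move=> ht; have hz : b + t * a <= 0 by rewrite /b; nra.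
  have [e0 e1 e2] := S_le0 hz.
  by rewrite /H e0; ring.
have caseHhi t : 1 <= t -> [/\ H t = 0, H1 t = 0 & H2 t = 0].
  move=> ht; have hz : 3 <= b + t * a by rewrite /b; nra.
  have [e0 e1 e2] := S_ge3 hz.
  by rewrite /H /H1 /H2 e0 e1 e2; split; ring.
have Hb t : 0 <= H t <= 1.
  by rewrite /H; have := S0_bound (b + t * a) => /andP[h1 h2]; apply/andP; split; lra.
have Kb s : 0 <= K s <= 1.
  by rewrite /K; have := S0_bound (bK + s * aK) => /andP[h1 h2]; apply/andP; split; lra.
have H1b t : - a <= H1 t <= 0.
  by rewrite /H1; have := S1_bound (b + t * a) => /andP[h1 h2]; apply/andP; split; nra.
have H2b t : `|H2 t| <= a * a.
  have := S2_bound (b + t * a); rewrite /H2; cbv beta; move: (S2 _) => s hs.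
  rewrite normrN normrM normrM (gtr0_norm a0) -mulrA ler_piMl //.
  by rewrite mulr_ge0 // ltW.
have zoneA y : enorm (y - x) <= c2x * r -> [/\ K (Qf x y) = 1, K1 (Qf x y) = 0 & K2 (Qf x y) = 0].
  move=> hy; apply: caseKlo; rewrite hQ.
  by rewrite ler_pXn2r ?nnegrE ?en0 //; [lra | lra].
have zoneB y : G y -> enorm (y - x) <= rx -> c2x * r < enorm (y - x) ->
    [/\ H (Lf x w y) = 0, H1 (Lf x w y) = 0 & H2 (Lf x w y) = 0].
  move=> Gy h1 h2; apply: caseHhi; rewrite hL.
  have := F2 y Gy h1 h2 => h.
  by rewrite ler_pdivlMl // mulr1 ltW.
have zoneC y : rx < enorm (y - x) -> [/\ K (Qf x y) = 0, K1 (Qf x y) = 0 & K2 (Qf x y) = 0].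
  move=> hy; apply: caseKhi; rewrite hQ.
  by rewrite ler_pXn2r ?nnegrE ?en0 //; [lra | lra].
have Cl_closed : closed [set z | Qf x z <= rho2 ^+ 2].
  apply: (@preimage_closed _ _ (Qf x) [set s | s <= rho2 ^+ 2]).
    by move=> z _; exact: (@cont_Qf R J x z).
  exact: closed_le.
have sub1 : [set z | gf x w H K z != 0] `<=` [set z | Qf x z <= rho2 ^+ 2].
  move=> z /= gz; rewrite leNgt; apply/negP => hq.
  have [e0 _ _] := caseKhi _ (ltW hq).
  by move: gz; rewrite /gf e0 mulr0 eqxx.
have suppsub : supp (gf x w H K) `<=` [set z | Qf x z <= rho2 ^+ 2].
  move=> z hz; have := closureS sub1 hz.
  by rewrite -(proj1 (closure_id _) Cl_closed).
split.
- split; first exact: (C2_gf x w dH dH1 dK dK1 cH2 cK2).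
  split.
    apply: (@subclosed_compact _ _
      [set z : 'rV[R]_J | forall i, `[x ord0 i - rho2, x ord0 i + rho2]%classic (z ord0 i)]).
    - exact: closed_closure.
    - by apply: (@rV_compact _ _ (fun i => `[x ord0 i - rho2, x ord0 i + rho2]%classic)) => i; exact: segment_compact.
    - move=> z /suppsub /= hz i.
      have ez : enorm (z - x) <= rho2.
        by rewrite -(ler_pXn2r (n := 2)) ?nnegrE ?en0 -?hQ //; lra.
      have := coord_le_enorm (z - x) i; rewrite mxE mxE => hc.
      have := le_trans hc ez; rewrite ler_norml => /andP[h1 h2].
      rewrite /= in_itv /=; apply/andP; split.
        have -> : (ord0 : 'I_1) = 0 by apply/val_inj.
        lra.
      have -> : (ord0 : 'I_1) = 0 by apply/val_inj.
      lra.
  move=> y _; rewrite /gf; apply: mulr_ge0.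
    by case/andP: (Hb (Lf x w y)).
  by case/andP: (Kb (Qf x y)).
- split.
    move=> y [hs Gy]; split => //; rewrite /cball /=.
    rewrite leNgt; apply/negP => hlt.
    have [yr|yr] := leP (enorm (y - x)) rx.
      have hL1 : 1 < Lf x w y.
        by rewrite hL ltr_pdivlMl // mulr1; exact: F2.
      have nb : \forall z \near y, 1 < Lf x w z.
        have cL : Lf x w @ y --> Lf x w y := @cont_Lf R J x w y.
        exact: (cvgr_gt (Lf x w y) cL 1 hL1).
      have [z [gz Bz]] := hs _ nb.
      have [e0 _ _] := caseHhi _ (ltW Bz).
      by move: gz; rewrite /= /gf e0 mul0r eqxx.
    have := suppsub y hs; rewrite /= hQ => hq.
    have : rho2 ^+ 2 < enorm (y - x) ^+ 2.
      by rewrite ltr_pXn2r ?nnegrE ?en0 //; lra.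
    lra.
  by move=> y [cy Gy]; split => //; rewrite /cball /= in cy *; lra.
- move=> y cy Gy; rewrite /cball /= in cy.
  have c12 : c1x * r <= c2x * r by rewrite ler_pM2r //; lra.
  have [k1 _ _] := zoneA y (le_trans cy c12).
  rewrite /gf k1 caseHlo ?mulr1 // hL ler_pdivrMl //.
  have := hCS y; rewrite ler_norml => /andP[_ h].
  by rewrite mulrC; apply: le_trans h _.
- have A1 : 1 <= 1 + a + J%:R ^+ 2 * a ^+ 2.
    have := ltW a0; have : 0 <= J%:R ^+ 2 * a ^+ 2 by rewrite mulr_ge0 ?sqr_ge0.
    lra.
  have JA : 0 <= J%:R ^+ 2 * a ^+ 2 by rewrite mulr_ge0 ?sqr_ge0.
  split.
  + move=> y _; rewrite /gf normrM.
    have [h1 h2] := andP (Hb (Lf x w y)); have [k1 k2] := andP (Kb (Qf x y)).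
    rewrite (ger0_norm h1) (ger0_norm k1); apply: le_trans A1.
    by rewrite -[1]mulr1 ler_pM.
  + move=> y Gy.
    have Ar : 0 <= (1 + a + J%:R ^+ 2 * a ^+ 2) / r by rewrite divr_ge0 // ltW // (lt_le_trans ltr01 A1).
    have [yA|yA] := leP (enorm (y - x)) (c2x * r).
      have [k1 k2 _] := zoneA y yA.
      have hr : `|r^-1| = r^-1 by rewrite gtr0_norm // invr_gt0.
      have [h1 h2] := andP (H1b (Lf x w y)).
      have hw : enorm w = r^-1 by rewrite /w enormZ v1 mulr1 hr.
      rewrite (grad_caseA w dH dK k1 k2) enormZ hw ler_pM2r ?invr_gt0 //.
      rewrite ler0_norm //; lra.
    have [yB|yB] := leP (enorm (y - x)) rx.
      have [e0 e1 _] := zoneB y Gy yB yA.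
      by rewrite (grad_caseZ dH dK (or_introl (conj e0 e1))) enorm0.
    have [e0 e1 _] := zoneC y yB.
    by rewrite (grad_caseZ dH dK (or_intror (conj e0 e1))) enorm0.
  + exists (J%:R ^+ 2 * a ^+ 2 / r ^+ 2).
      by rewrite ltr_pM2r ?invr_gt0 ?exprn_gt0 //; lra.
    move=> y Gy.
    have hr : `|r^-1| = r^-1 by rewrite gtr0_norm // invr_gt0.
    have hw i : `|w 0 i| <= r^-1.
      rewrite /w mxE normrM hr -[X in _ <= X]mulr1 ler_pM2l ?invr_gt0 //.
      by have := coord_le_enorm vx i; rewrite v1.
    have E i j : partial (partial (gf x w H K) j) i y = ddgf x w H H1 H2 K K1 K2 j i y.
      exact: (hess_gf x w dH dH1 dK dK1).
    have B0 : 0 <= J%:R ^+ 2 * a ^+ 2 / r ^+ 2.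
      by rewrite divr_ge0 // ?exprn_ge0 // ltW.
    have [yA|yA] := leP (enorm (y - x)) (c2x * r).
      have [k1 k2 k3] := zoneA y yA.
      have hb i j : `|partial (partial (gf x w H K) j) i y| <= a * a * r^-1 * r^-1.
        rewrite E (ddgf_caseA w H H1 H2 j i k1 k2 k3) !normrM.
        apply: ler_pM; rewrite ?mulr_ge0 ?normr_ge0 //.
        apply: ler_pM; rewrite ?mulr_ge0 ?normr_ge0 //.
      apply: (le_trans (ler_sum _ (fun i _ => ler_sum _ (fun j _ => hb i j)))).
      rewrite !sumr_const !card_ord -(mulr_natl (a * a * r^-1 * r^-1) J).
      rewrite -(mulr_natl (J%:R * (a * a * r^-1 * r^-1)) J).
      rewrite le_eqVlt; apply/orP; left; apply/eqP.
      by field; rewrite gt_eqF.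
    have hz i j : ddgf x w H H1 H2 K K1 K2 j i y = 0.
      apply: ddgf_caseZ.
      have [yB|yB] := leP (enorm (y - x)) rx.
        by have [e0 e1 e2] := zoneB y Gy yB yA; left.
      by have [e0 e1 e2] := zoneC y yB; right.
    rewrite big1 // => i _; rewrite big1 // => j _.
    by rewrite E hz normr0.
- move=> y [Gy _] d [s [s0 ->]].
  have hw (u : 'rV[R]_J) : dotp u w = r^-1 * dotp u vx by rewrite /w dotpZr.
  have [yA|yA] := leP (enorm (y - x)) (c2x * r).
    have [k1 k2 _] := zoneA y yA.
    rewrite (grad_caseA w dH dK k1 k2) dotpZr hw dotp_suml.
    have [h1 h2] := andP (H1b (Lf x w y)).
    have [_ _ Ht] := Hy y Gy (le_trans yA (ltW c2r)).
    have sum0 : 0 <= \sum_(i | `[< Iset phi y i >]) dotp (s i *: gamma i y) vx.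
      apply: sumr_ge0 => i /asboolP hi.
      by rewrite dotpZl mulr_ge0 //; exact: Ht.
    by rewrite mulr_le0_ge0 // mulr_ge0 // ltW // invr_gt0.
  have [yB|yB] := leP (enorm (y - x)) rx.
    have [e0 e1 _] := zoneB y Gy yB yA.
    by rewrite (grad_caseZ dH dK (or_introl (conj e0 e1))) dotp0r.
  have [e0 e1 _] := zoneC y yB.
  by rewrite (grad_caseZ dH dK (or_intror (conj e0 e1))) dotp0r.
Qed.
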